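(* Let $u\in(0,1]$, $\beta\in(0,1)$ and $\tau_k\triangleq\lceil(k+1)^u\rceil$ for $k\ge0$. Then for every $k\ge1$, $$\sum_{s=1}^k\beta^{\sum_{p=s}^k\tau_p}\le e\big(\ln(\beta^{-1/(u+1)})\big)^{-\frac{1}{u+1}}\beta^{\frac{(k+1)^{u+1}}{u+1}}+\beta^{\frac{(k+1)^{u+1}-k^{u+1}}{u+1}}\Big(1+\frac{u+1}{k^u\ln(1/\beta)}\Big).$$ *)

(* Defs.v *)
From Stdlib Require Import Reals ZArith.
Open Scope R_scope.

(* floor y = up y - 1, since up y is the unique integer with y < up y <= y + 1 *)
Definition Rceil (x : R) : Z := (1 - up (- x))%Z.

Definition tau (u : R) (k : nat) : R := IZR (Rceil (Rpower (INR k + 1) u)).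

(* sum_{p=s}^{k} f p *)
Fixpoint sum_from_to (f : nat -> R) (s k : nat) : R :=
  match k with
  | O => if Nat.leb s 0 then f 0%nat else 0
  | S k' => sum_from_to f s k' + (if Nat.leb s (S k') then f (S k') else 0)
  end.

(* Main.v *)
Require Import Defs.
From Stdlib Require Import Reals ZArith Lra Lia.
From Coquelicot Require Import Coquelicot.
Open Scope R_scope.

Lemma exp_le' x y : x <= y -> exp x <= exp y.
Proof. intros [H|H]; [left; apply exp_increasing; auto| subst; lra]. Qed.

Lemma Rceil_ge x : x <= IZR (Rceil x).
Proof. unfold Rceil. rewrite minus_IZR. destruct (archimed (-x)). lra. Qed.

Lemma sft_gt f s k : (k < s)%nat -> sum_from_to f s k = 0.
Proof.
  induction k; intros H; simpl.
  - destruct s; [lia|reflexivity].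
  - rewrite IHk by lia. destruct (Nat.leb s (S k)) eqn:E.
    + apply Nat.leb_le in E; lia.
    + lra.
Qed.

Lemma sft_S f s k : (s <= S k)%nat -> sum_from_to f s (S k) = sum_from_to f s k + f (S k).
Proof. intros H. simpl. apply Nat.leb_le in H. rewrite H. reflexivity. Qed.

Lemma sft_mono f g k : (forall p, (1 <= p <= k)%nat -> f p <= g p) ->
  sum_from_to f 1 k <= sum_from_to g 1 k.
Proof.
  induction k; intros H.
  - simpl. lra.
  - rewrite !sft_S by lia. apply Rplus_le_compat; [apply IHk; intros; apply H; lia|]. apply H; lia.
Qed.

Lemma sft_scal B h k : sum_from_to (fun p => B * h p) 1 k = B * sum_from_to h 1 k.
Proof.
  induction k.
  - simpl. lra.
  - rewrite !sft_S by lia. rewrite IHk. ring.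
Qed.

Lemma Epow_S a y : 0 < y -> exp ((a+1) * ln y) = exp (a * ln y) * y.
Proof. intros. replace ((a+1)*ln y) with (a * ln y + ln y) by ring.
  rewrite exp_plus, exp_ln; auto. Qed.

Lemma Epow_mono a x y : 0 <= a -> 0 < x -> x <= y -> exp (a * ln x) <= exp (a * ln y).
Proof. intros. apply exp_le'. apply Rmult_le_compat_l; auto. apply ln_le; auto. Qed.

Lemma per_term u p : 0 < u -> 0 < p ->
  (exp ((u+1) * ln (p+1)) - exp ((u+1) * ln p)) / (u+1) <= exp (u * ln (p+1)).
Proof.
  intros hu hp.
  set (h := fun x => exp ((u+1) * ln x)).
  set (h' := fun x => (u+1) * exp (u * ln x)).
  destruct (MVT_cor2 h h' p (p+1)) as [xi [Hxi Hr]]; [lra| |].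
  - intros y Hy. apply is_derive_Reals. unfold h, h'.
    auto_derive; [lra|]. rewrite Epow_S by lra. field. lra.
  - unfold h in Hxi. rewrite Hxi. unfold h'.
    replace (p + 1 - p) with 1 by ring.
    assert (exp (u * ln xi) <= exp (u * ln (p+1))) by (apply Epow_mono; lra).
    replace ((u + 1) * exp (u * ln xi) * 1 / (u + 1)) with (exp (u * ln xi)) by (field; lra).
    lra.
Qed.
Lemma tau_lb u k s : 0 < u -> (1 <= s)%nat -> (s <= S k)%nat ->
  (exp ((u+1) * ln (INR (S k))) - exp ((u+1) * ln (INR s))) / (u+1)
  <= sum_from_to (tau u) s k.
Proof.
  intros hu; revert s; induction k; intros s h1 h2.
  - assert (s = 1%nat) by lia; subst. simpl. lra.
  - destruct (Nat.eq_dec s (S (S k))) as [->|Hne].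
    + rewrite sft_gt by lia. lra.
    + rewrite sft_S by lia.
      specialize (IHk s h1 ltac:(lia)).
      assert (Ht : (exp ((u+1) * ln (INR (S (S k)))) - exp ((u+1) * ln (INR (S k)))) / (u+1)
                   <= tau u (S k)).
      { unfold tau, Rpower. eapply Rle_trans; [|apply Rceil_ge].
        rewrite (S_INR (S k)). apply per_term; auto. apply lt_0_INR; lia. }
      apply (Rmult_le_reg_l (u+1)); [lra|].
      apply (Rmult_le_compat_l (u+1)) in IHk; [|lra].
      apply (Rmult_le_compat_l (u+1)) in Ht; [|lra].
      replace ((u + 1) * ((exp ((u + 1) * ln (INR (S (S k)))) - exp ((u + 1) * ln (INR s))) / (u + 1)))
        with ((u + 1) * ((exp ((u + 1) * ln (INR (S k))) - exp ((u + 1) * ln (INR s))) / (u + 1))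
            + (u + 1) * ((exp ((u + 1) * ln (INR (S (S k)))) - exp ((u + 1) * ln (INR (S k)))) / (u + 1)))
        by (field; lra).
      lra.
Qed.

Definition gg c u x := exp (c * exp ((u+1) * ln x)).
Definition FF c u x := gg c u x / (c * exp (u * ln x)).

Lemma gg_mono c u x y : 0 < c -> 0 < u -> 0 < x -> x <= y -> gg c u x <= gg c u y.
Proof. intros. unfold gg. apply exp_le'. apply Rmult_le_compat_l; [lra|].
  apply Epow_mono; lra. Qed.

Lemma key c u x : 0 < c -> 0 < u -> 0 < x -> 1 < c * exp ((u+1) * ln x) ->
  gg c u x + FF c u x <= FF c u (x+1).
Proof.
  intros hc hu hx h1.
  set (phi := fun y => FF c u y - gg c u x * y).
  set (phi' := fun y => gg c u y * ((u+1) - u / (c * exp ((u+1) * ln y))) - gg c u x).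
  destruct (MVT_cor2 phi phi' x (x+1)) as [xi [Hxi Hr]]; [lra| |].
  - intros y Hy. apply is_derive_Reals. unfold phi, phi', FF, gg.
    auto_derive.
    + split; [lra|]. split; [lra|]. split; [|exact I].
      apply Rgt_not_eq, Rmult_gt_0_compat; auto; apply exp_pos.
    + rewrite !Epow_S by lra.
      assert (0 < exp (u * ln y)) by apply exp_pos.
      field. repeat split; try lra.
  - assert (phi' xi >= 0).
    { unfold phi'.
      assert (hm : c * exp ((u+1) * ln x) <= c * exp ((u+1) * ln xi)).
      { apply Rmult_le_compat_l; [lra|]. apply Epow_mono; lra. }
      assert (gg c u x <= gg c u xi) by (apply gg_mono; lra).
      assert (1 <= (u+1) - u / (c * exp ((u+1) * ln xi))).
      { assert (u / (c * exp ((u + 1) * ln xi)) <= u).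
        { assert (/ (c * exp ((u + 1) * ln xi)) <= 1).
          { apply (Rle_trans _ (/1)); [apply Rinv_le_contravar; lra | rewrite Rinv_1; lra]. }
          unfold Rdiv. nra. }
        lra. }
      assert (0 < gg c u xi) by apply exp_pos.
      nra. }
    unfold phi in Hxi. replace (x + 1 - x) with 1 in Hxi by ring. nra.
Qed.
Section S.
Variables c u : R.
Hypothesis hc : 0 < c.
Hypothesis hu : 0 < u.
Let x0 := exp (- (1 / (u+1)) * ln c).

Lemma cE_eq y : 0 < y -> c * exp ((u+1) * ln y) = exp (ln c + (u+1) * ln y).
Proof. intros. rewrite exp_plus, exp_ln; auto. Qed.

Lemma le_x0 y : 0 < y -> y <= x0 -> c * exp ((u+1) * ln y) <= 1.
Proof.
  intros hy h. rewrite cE_eq by auto. apply (Rle_trans _ (exp 0)); [|rewrite exp_0; lra]. apply exp_le'.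
  apply ln_le in h; auto. unfold x0 in h. rewrite ln_exp in h.
  apply (Rmult_le_compat_l (u+1)) in h; [|lra].
  replace ((u + 1) * (- (1 / (u + 1)) * ln c)) with (- ln c) in h by (field; lra). lra.
Qed.

Lemma gt_x0 y : 0 < y -> x0 < y -> 1 < c * exp ((u+1) * ln y).
Proof.
  intros hy h. rewrite cE_eq by auto. apply (Rle_lt_trans _ (exp 0)); [rewrite exp_0; lra|]. apply exp_increasing.
  apply ln_increasing in h; [|apply exp_pos]. unfold x0 in h. rewrite ln_exp in h.
  apply (Rmult_lt_compat_l (u+1)) in h; [|lra].
  replace ((u + 1) * (- (1 / (u + 1)) * ln c)) with (- ln c) in h by (field; lra). lra.
Qed.

Lemma sumA n : INR n <= x0 -> sum_from_to (fun p => gg c u (INR p)) 1 n <= exp 1 * INR n.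
Proof.
  induction n; intros h.
  - simpl. lra.
  - rewrite sft_S by lia. rewrite S_INR in *.
    assert (INR n <= x0) by (pose proof (pos_INR n); lra).
    specialize (IHn H).
    assert (gg c u (INR n + 1) <= exp 1).
    { unfold gg. apply exp_le'. apply le_x0; auto. pose proof (pos_INR n); lra. }
    lra.
Qed.

Lemma FF_pos y : 0 <= FF c u y.
Proof. unfold FF, gg. apply Rlt_le, Rdiv_lt_0_compat; [apply exp_pos|].
  apply Rmult_lt_0_compat; [lra|apply exp_pos]. Qed.

Lemma sumB n : (1 <= n)%nat -> x0 < INR n ->
  sum_from_to (fun p => gg c u (INR p)) 1 n <= exp 1 * x0 + gg c u (INR n) + FF c u (INR n).
Proof.
  induction n; intros h1 h2; [lia|].
  rewrite sft_S by lia.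
  assert (Hx0 : 0 < x0) by apply exp_pos.
  assert (0 < exp 1) by apply exp_pos.
  pose proof (FF_pos (INR (S n))).
  destruct (Rle_lt_dec (INR n) x0) as [hl|hl].
  - pose proof (sumA n hl). assert (exp 1 * INR n <= exp 1 * x0) by (apply Rmult_le_compat_l; lra).
    lra.
  - destruct n as [|n]; [simpl in hl; lra|].
    specialize (IHn ltac:(lia) hl).
    pose proof (key c u (INR (S n)) hc hu ltac:(apply lt_0_INR; lia)
                  (gt_x0 (INR (S n)) ltac:(apply lt_0_INR; lia) hl)).
    match goal with H : _ <= FF c u (_ + 1) |- _ => rewrite <- S_INR in H end. lra.
Qed.

Lemma sumAll n : (1 <= n)%nat ->
  sum_from_to (fun p => gg c u (INR p)) 1 n <= exp 1 * x0 + gg c u (INR n) + FF c u (INR n).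
Proof.
  intros h. destruct (Rle_lt_dec (INR n) x0) as [hl|hl].
  - pose proof (sumA n hl). assert (exp 1 * INR n <= exp 1 * x0)
      by (apply Rmult_le_compat_l; [apply Rlt_le, exp_pos|lra]).
    pose proof (FF_pos (INR n)). assert (0 < gg c u (INR n)) by apply exp_pos. lra.
  - apply sumB; auto.
Qed.
End S.
Theorem lemma7 (u beta : R) (k : nat)
  (hu0 : 0 < u) (hu1 : u <= 1) (hb0 : 0 < beta) (hb1 : beta < 1)
  (hk : (1 <= k)%nat) :
  sum_from_to (fun s => Rpower beta (sum_from_to (tau u) s k)) 1 k
  <= exp 1 * Rpower (ln (Rpower beta (- (1 / (u + 1))))) (- (1 / (u + 1)))
       * Rpower beta (Rpower (INR k + 1) (u + 1) / (u + 1))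
     + Rpower beta ((Rpower (INR k + 1) (u + 1) - Rpower (INR k) (u + 1)) / (u + 1))
       * (1 + (u + 1) / (Rpower (INR k) u * ln (1 / beta))).
Proof.
  assert (hlb : ln beta < 0) by (rewrite <- ln_1; apply ln_increasing; lra).
  set (L := - ln beta).
  assert (hL : 0 < L) by (unfold L; lra).
  set (c := L / (u+1)).
  assert (hc : 0 < c) by (unfold c; apply Rdiv_lt_0_compat; lra).
  set (P := Rpower (INR k + 1) (u + 1)).
  set (B := Rpower beta (P / (u + 1))).
  assert (hB : 0 < B) by apply exp_pos.
  assert (Hterm : forall y, 0 < y -> Rpower beta ((P - Rpower y (u+1)) / (u+1)) = B * gg c u y).
  { intros y hy. unfold B, gg, Rpower. rewrite <- exp_plus. f_equal.
    unfold c, L. field. lra. }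
  apply Rle_trans with (sum_from_to (fun s => B * gg c u (INR s)) 1 k).
  { apply sft_mono. intros p hp.
    rewrite <- Hterm by (apply lt_0_INR; lia).
    unfold Rpower. apply exp_le'.
    pose proof (tau_lb u k p hu0 ltac:(lia) ltac:(lia)) as T.
    rewrite S_INR in T. fold (Rpower (INR k + 1) (u+1)) in T. fold P in T.
    nra. }
  rewrite sft_scal.
  pose proof (sumAll c u hc hu0 k hk) as HS.
  assert (hk0 : 0 < INR k) by (apply lt_0_INR; lia).
  replace (Rpower beta ((P - Rpower (INR k) (u + 1)) / (u + 1))) with (B * gg c u (INR k))
    by (symmetry; apply Hterm; auto).
  assert (Hln : ln (Rpower beta (- (1 / (u + 1)))) = c).
  { unfold Rpower. rewrite ln_exp. unfold c, L. field. lra. }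
  rewrite Hln.
  assert (Hl2 : ln (1 / beta) = L).
  { unfold Rdiv. rewrite Rmult_1_l, ln_Rinv; auto. }
  rewrite Hl2.
  assert (HF : gg c u (INR k) * ((u + 1) / (Rpower (INR k) u * L)) = FF c u (INR k)).
  { unfold FF, Rpower, c. assert (0 < exp (u * ln (INR k))) by apply exp_pos. field. lra. }
  fold B.
  replace (exp 1 * Rpower c (- (1 / (u + 1))) * B +
     B * gg c u (INR k) * (1 + (u + 1) / (Rpower (INR k) u * L)))
   with (B * (exp 1 * exp (- (1 / (u + 1)) * ln c) + gg c u (INR k) + FF c u (INR k)))
   by (rewrite <- HF; unfold Rpower; ring).
  apply Rmult_le_compat_l; lra.
Qed.
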